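(* If $G$ is a bipartite finite simple graph of order $n$ with at least one edge, then $\mathrm{es}_{\Delta}(G)\leq n/2$.
   Context: $\mathrm{es}_{\Delta}(G)$ is the minimum number of edges of $G$ whose removal results in a subgraph with maximum degree $\Delta(G)-1$. *)

(* Defs.v *)
From mathcomp Require Import all_boot.
Set Implicit Arguments. Unset Strict Implicit. Unset Printing Implicit Defensive.

Section Graphs.
Variable T : finType.

Definition simple_graph (e : rel T) : Prop := irreflexive e /\ symmetric e.

Definition bipartite (e : rel T) : Prop :=
  exists A : {set T}, forall x y, e x y -> (x \in A) != (y \in A).

Definition edges (e : rel T) : {set {set T}} :=
  [set [set x; y] | x in T, y in T & e x y].

Definition remove_edges (e : rel T) (F : {set {set T}}) : rel T :=
  fun x y => e x y && ([set x; y] \notin F).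

Definition deg (e : rel T) (x : T) : nat := #|[set y | e x y]|.

Definition maxdeg (e : rel T) : nat := \max_(x : T) deg e x.

(* es_Delta(G): minimum number of edges whose removal yields max degree Delta(G)-1.
   (Default value #|edges e| is irrelevant whenever such a set exists.) *)
Definition es_Delta (e : rel T) : nat :=
  \big[minn/#|edges e|]_(F in powerset (edges e)
     | maxdeg (remove_edges e F) == (maxdeg e).-1) #|F|.

End Graphs.

(* Main.v *)
Require Import Defs.
From mathcomp Require Import all_boot.
Set Implicit Arguments. Unset Strict Implicit. Unset Printing Implicit Defensive.

Lemma edgesP (T : finType) (e : rel T) f :
  reflect (exists x y, e x y /\ f = [set x; y]) (f \in edges e).
Proof.
rewrite /edges; apply: (iffP idP).
  by case/imset2P => x y _; rewrite inE => exy ->; exists x, y.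
case=> x [y [exy ->]]; apply/imset2P; by exists x y; rewrite ?inE.
Qed.

Definition sw (a b c : nat) := if c == a then b else if c == b then a else c.

Lemma sw_eqa a b c : (sw a b c == a) = (c == b).
Proof.
rewrite /sw. have [ca|ca] := eqVneq c a; have [cb|cb] := eqVneq c b; subst => //.
- by rewrite !eqxx.
- by rewrite eq_sym (negbTE cb).
- by rewrite eqxx.
- by rewrite (negbTE ca).
Qed.
Lemma sw_inj a b : injective (sw a b).
Proof.
move=> c d; rewrite /sw.
have [ca|ca] := eqVneq c a; have [cb|cb] := eqVneq c b;
have [da|da] := eqVneq d a; have [db|db] := eqVneq d b; subst => // H; subst; match goal with H : is_true (?x != ?x) |- _ => by rewrite eqxx in H end.
Qed.

Lemma sw_other a b c : c != a -> c != b -> sw a b c = c.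
Proof. by rewrite /sw => /negbTE -> /negbTE ->. Qed.

Lemma sw_lt a b c D : a < D -> b < D -> c < D -> sw a b c < D.
Proof. by rewrite /sw; case: ifP => _ //; case: ifP. Qed.

Lemma connect_pred (T : finType) (r : rel T) v w :
  connect r v w -> w != v -> exists2 w', connect r v w' & r w' w.
Proof.
case/connectP => p; case/lastP: p => [|p x] /=; first by move=> _ ->; rewrite eqxx.
rewrite rcons_path last_rcons => /andP [pp rx] -> _.
by exists (last v p) => //; apply/connectP; exists p.
Qed.

Lemma kempe (T : finType) (A : {set T}) (e : rel T) (col : T -> T -> nat) (u v : T) (a b D : nat) :
  symmetric e -> (forall x y, e x y -> (x \in A) != (y \in A)) ->
  (forall x y, col x y = col y x) ->
  (forall x y, e x y -> col x y < D) ->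
  (forall x y z, e x y -> e x z -> y != z -> col x y != col x z) ->
  a < D -> b < D ->
  (u \in A) != (v \in A) ->
  (forall y, e u y -> col u y != a) ->
  (forall y, e v y -> col v y != b) ->
  exists col2 : T -> T -> nat, [/\ forall x y, col2 x y = col2 y x,
     forall x y, e x y -> col2 x y < D,
     forall x y z, e x y -> e x z -> y != z -> col2 x y != col2 x z,
     forall y, e u y -> col2 u y != a & forall y, e v y -> col2 v y != a].
Proof.
move=> esym bip csym cD cpr aD bD uv ua vb.
pose s x := (x \in A) == (v \in A).
pose Dr := [rel x y | e x y && (if s x then col x y == a else col x y == b)].
pose C := [set w | connect Dr v w].
have vC : v \in C by rewrite inE connect0.
have predC w : w \in C -> w != v -> exists2 w', w' \in C & Dr w' w.
  rewrite inE => /connect_pred H /H [w' H1 H2]; exists w' => //; by rewrite inE.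
have stepC x y : x \in C -> Dr x y -> y \in C.
  rewrite !inE => H1 H2; apply: connect_trans H1 _; exact: connect1.
have uC : u \notin C.
  apply/negP => /predC []; first by apply/negP => /eqP E; move: uv; rewrite E eqxx.
  move=> w' _ /andP [ew' ]; have bw := bip _ _ ew'; rewrite /s.
  have -> : (w' \in A) == (v \in A).
    by move: uv bw; case: (w' \in A); case: (u \in A); case: (v \in A).
  move=> /eqP E; move: (ua w'); rewrite esym ew' csym E eqxx; by move/(_ isT).
have clos x y : x \in C -> e x y -> (col x y == a) || (col x y == b) -> y \in C.
  move=> xC exy; case sx : (s x).
  - case/orP => [ca|cb]; first by apply: stepC xC _; rewrite /= exy sx.
    have [xv|xv] := eqVneq x v; first by subst x; move: (vb y exy); rewrite cb.
    case: (predC x xC xv) => w wC /andP [ewx].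
    have sw' : s w = false.
      move: (bip _ _ ewx) sx; rewrite /s.
      by case: (w \in A); case: (x \in A); case: (v \in A).
    rewrite sw' => cwx.
    have -> : y = w; last by [].
    apply/eqP; apply: contraTT isT => yw.
    have := cpr x y w exy; rewrite esym ewx => /(_ isT yw).
    by rewrite (csym x w) (eqP cwx) (eqP cb) eqxx.
  - case/orP => [ca|cb]; last by apply: stepC xC _; rewrite /= exy sx.
    have [xv|xv] := eqVneq x v; first by subst x; move: sx; rewrite /s eqxx.
    case: (predC x xC xv) => w wC /andP [ewx].
    have sw' : s w = true.
      move: (bip _ _ ewx) sx; rewrite /s.
      by case: (w \in A); case: (x \in A); case: (v \in A).
    rewrite sw' => cwx.
    have -> : y = w; last by [].
    apply/eqP; apply: contraTT isT => yw.
    have := cpr x y w exy; rewrite esym ewx => /(_ isT yw).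
    by rewrite (csym x w) (eqP cwx) (eqP ca) eqxx.
pose col2 x y := if (x \in C) && (y \in C) then sw a b (col x y) else col x y.
have k1 x y : x \in C -> e x y -> col2 x y = sw a b (col x y).
  move=> xC exy; rewrite /col2 xC /=; case: ifP => // yC.
  rewrite sw_other //; apply/negP => /eqP E.
    by move: yC; rewrite (clos x y xC exy) // E eqxx.
  by move: yC; rewrite (clos x y xC exy) // E eqxx orbT.
have k2 x y : x \notin C -> col2 x y = col x y.
  by move=> xC; rewrite /col2 (negbTE xC).
exists col2; split.
- by move=> x y; rewrite /col2 andbC csym.
- move=> x y exy; case xC : (x \in C).
    by rewrite k1 // sw_lt // cD.
  by rewrite k2 ?xC // cD.
- move=> x y z exy exz yz; case xC : (x \in C).
    by rewrite !k1 //; apply: contra (cpr x y z exy exz yz) => /eqP /sw_inj ->.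
  by rewrite !k2 ?xC //; apply: cpr.
- by move=> y euy; rewrite k2 // ua.
- by move=> y evy; rewrite k1 // sw_eqa vb.
Qed.

Lemma missing_color (T : finType) (e : rel T) (col : T -> T -> nat) x D :
  deg e x < D -> exists2 a, a < D & forall y, e x y -> col x y != a.
Proof.
move=> dD.
case H : (has (fun a => [forall y, e x y ==> (col x y != a)]) (iota 0 D)).
  case/hasP: H => a; rewrite mem_iota add0n => aD /forallP H.
  by exists a => // y exy; move: (H y); rewrite exy.
exfalso; move/negbT/hasPn: H => H.
have sub : {subset iota 0 D <= map (col x) (enum [set y | e x y])}.
  move=> a ai; move: (H a ai); rewrite negb_forall => /existsP [y].
  rewrite negb_imply negbK => /andP [exy /eqP <-].
  by apply: map_f; rewrite mem_enum inE.
have := uniq_leq_size (iota_uniq 0 D) sub.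
rewrite size_map size_iota -cardE; move: dD; rewrite /deg.
by move=> h1 h2; move: (leq_ltn_trans h2 h1); rewrite ltnn.
Qed.

Definition bipA (T : finType) (A : {set T}) (e : rel T) :=
  forall x y, e x y -> (x \in A) != (y \in A).

Lemma coloring (T : finType) (A : {set T}) (D : nat) : forall n (e : rel T),
  #|[set p : T * T | e p.1 p.2]| <= n -> irreflexive e -> symmetric e -> bipA A e ->
  (forall x, deg e x <= D) ->
  exists col : T -> T -> nat, [/\ forall x y, col x y = col y x,
     forall x y, e x y -> col x y < D &
     forall x y z, e x y -> e x z -> y != z -> col x y != col x z].
Proof.
elim=> [|n IH] e.
  rewrite leqn0 cards_eq0 => /eqP E0 _ _ _ _.
  have ne x y : e x y = false.
    by apply/negP => exy; have : (x, y) \in [set p : T * T | e p.1 p.2];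
       [rewrite inE | rewrite E0 inE].
  by exists (fun _ _ => 0); split => // x y; rewrite ne.
move=> cn irr esym bip dD.
case: (boolP [exists p : T * T, e p.1 p.2]); last first.
  move=> /existsPn ne.
  have ne' x y : e x y = false by apply/negbTE; exact: (ne (x, y)).
  by exists (fun _ _ => 0); split => // x y; rewrite ne'.
case/existsP => [[u v]] /= euv.
pose e' := [rel x y | e x y && ~~ (((x == u) && (y == v)) || ((x == v) && (y == u)))].
have e'e x y : e' x y -> e x y by case/andP.
have irr' : irreflexive e' by move=> x; rewrite /= irr.
have esym' : symmetric e'.
  by move=> x y; rewrite /= esym; congr (_ && ~~ _); case: (x == u); case: (y == v); case: (x == v); case: (y == u).
have bip' : bipA A e' by move=> x y /e'e /bip.
have card' : #|[set p : T * T | e' p.1 p.2]| <= n.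
  rewrite -ltnS; apply: leq_trans cn; apply: proper_card; apply/properP; split.
    by apply/subsetP => p; rewrite !inE => /e'e.
  by exists (u, v); rewrite !inE //= euv !eqxx.
have deg' x : deg e' x <= deg e x.
  by apply: subset_leq_card; apply/subsetP => y; rewrite !inE => /e'e.
have [col [csym cD cpr]] := IH e' card' irr' esym' bip' (fun x => leq_trans (deg' x) (dD x)).
have ltdeg w z : e w z -> ~~ e' w z -> deg e' w < D.
  move=> ewz ne'; apply: leq_trans (dD w); apply: proper_card; apply/properP; split.
    by apply/subsetP => y; rewrite !inE => /e'e.
  by exists z; rewrite !inE.
have nuv : ~~ e' u v by rewrite /e' /= !eqxx /= andbF.
have nvu : ~~ e' v u by rewrite /e' /= !eqxx orbT andbF.
have evu : e v u by rewrite esym.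
have [a aD ua] := missing_color col (ltdeg u v euv nuv).
have [b bD vb] := missing_color col (ltdeg v u evu nvu).
have [col2 [csym2 cD2 cpr2 ua2 va2]] :=
  kempe esym' bip' csym cD cpr aD bD (bip _ _ euv) ua vb.
have uv : u != v by apply/negP => /eqP E; move: euv; rewrite E irr.
pose cond x y := ((x == u) && (y == v)) || ((x == v) && (y == u)).
have condsym x y : cond x y = cond y x.
  by rewrite /cond; case: (x == u); case: (y == v); case: (x == v); case: (y == u).
have condeq x y z : cond x y -> cond x z -> y = z.
  rewrite /cond => /orP[/andP[/eqP-> /eqP->]|/andP[/eqP-> /eqP->]]
     /orP[/andP[/eqP H1 /eqP->]|/andP[/eqP H1 /eqP->]] //;
  by rewrite H1 eqxx in uv.
have condmiss x y : cond x y -> forall z, e' x z -> col2 x z != a.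
  by rewrite /cond => /orP[/andP[/eqP-> _]|/andP[/eqP-> _]].
have e'P x y : e x y -> ~~ cond x y -> e' x y by move=> exy nc; rewrite /= exy.
pose col3 x y := if cond x y then a else col2 x y.
exists col3; split.
- by move=> x y; rewrite /col3 condsym csym2.
- move=> x y exy; rewrite /col3; case: ifP => // /negbT nc.
  exact: cD2 (e'P _ _ exy nc).
- move=> x y z exy exz yz; rewrite /col3.
  case: ifP => cy; case: ifP => cz.
  + by move: yz; rewrite (condeq _ _ _ cy cz) eqxx.
  + by rewrite eq_sym; apply: (condmiss x y cy); apply: e'P => //; rewrite cz.
  + by apply: (condmiss x z cz); apply: e'P => //; rewrite cy.
  + by apply: cpr2 => //; apply: e'P => //; rewrite ?cy ?cz.
Qed.

Lemma set2_other (T : finType) (r : rel T) x y z :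
  symmetric r -> r x y -> z \in [set x; y] -> exists w, [set x; y] = [set z; w] /\ r z w.
Proof.
move=> rs rxy /set2P [->|->]; first by exists y.
by exists x; split; [rewrite setUC | rewrite rs].
Qed.

Lemma bigmin_le (I : finType) (P : pred I) (f : I -> nat) d i0 :
  P i0 -> \big[minn/d]_(i | P i) f i <= f i0.
Proof.
move=> Pi0; rewrite /index_enum; have : i0 \in index_enum I by rewrite mem_index_enum.
rewrite /index_enum; elim: (Finite.enum I) => // j s IH; rewrite in_cons big_cons.
case/orP => [/eqP <-|js]; first by rewrite Pi0 geq_minl.
case: ifP => _; last exact: IH.
by apply: leq_trans (geq_minr _ _) (IH js).
Qed.

Theorem corollary5p1 (T : finType) (e : rel T) :
  simple_graph e -> bipartite e -> (exists x y, e x y) ->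
  (es_Delta e).*2 <= #|T|.
Proof.
move=> [irr esym] [A bip] [x0 [y0 e0]].
set Dl := maxdeg e.
have dD x : deg e x <= Dl by rewrite /Dl /maxdeg; exact: (leq_bigmax x).
have [col [csym cD cpr]] := coloring (A:=A) (D:=Dl) (leqnn _) irr esym bip dD.
have Dpos : 0 < Dl.
  apply: leq_trans (dD x0); apply/card_gt0P; exists y0; by rewrite inE.
have cover0 x : deg e x = Dl -> exists2 y, e x y & col x y == 0.
  move=> dx.
  pose s := map (col x) (enum [set y | e x y]).
  have us : uniq s.
    rewrite map_inj_in_uniq ?enum_uniq // => y z; rewrite !mem_enum !inE => exy exz E.
    apply/eqP; apply: contraTT isT => yz; by move: (cpr x y z exy exz yz); rewrite E eqxx.
  have sub : {subset s <= iota 0 Dl}.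
    by move=> c /mapP [y]; rewrite mem_enum inE mem_iota add0n => exy ->; apply: cD.
  have hs : size (iota 0 Dl) <= size s by rewrite size_map size_iota -cardE -dx.
  have [_ eqs] := uniq_min_size us sub hs.
  have : 0 \in s by rewrite eqs mem_iota.
  by case/mapP => y; rewrite mem_enum inE => exy E; exists y => //; rewrite E.
pose r := [rel x y | e x y && (col x y == 0)].
have rs : symmetric r by move=> x y; rewrite /r /= esym csym.
pose M := [set [set x; y] | x in T, y in T & r x y].
have Mmem f z : f \in M -> z \in f -> exists w, f = [set z; w] /\ r z w.
  case/imset2P => x y _; rewrite inE => rxy -> zf.
  exact: set2_other rs rxy zf.
have Medges : M \subset edges e.
  apply/subsetP => f /imset2P [x y _]; rewrite inE => /andP [_ /andP [exy _]] ->.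
  by apply/edgesP; exists x, y.
have Mtriv : trivIset M.
  apply/trivIsetP => f1 f2 f1M f2M f12.
  rewrite -setI_eq0; apply/eqP/setP => z; rewrite !inE.
  apply/negP => /andP [z1 z2].
  have [w1 [E1 /andP [ez1 c1]]] := Mmem _ _ f1M z1.
  have [w2 [E2 /andP [ez2 c2]]] := Mmem _ _ f2M z2.
  have w12 : w1 = w2.
    apply/eqP; apply: contraTT isT => wn.
    by move: (cpr z w1 w2 ez1 ez2 wn); rewrite (eqP c1) (eqP c2).
  by move: f12; rewrite E1 E2 w12 eqxx.
have Mcard : #|M|.*2 <= #|T|.
  move: Mtriv; rewrite /trivIset => /eqP E.
  have : \sum_(B in M) #|B| = #|M| * 2.
    rewrite -sum_nat_const; apply: eq_bigr => B /imset2P [x y _]; rewrite inE => /andP [_ /andP [exy _]] ->.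
    by rewrite cards2; case: (eqVneq x y) => // xy; rewrite xy irr in exy.
  by rewrite E -muln2 => <-; apply: max_card.
pose Good (F : {set {set T}}) := [&& F \subset edges e,
   [forall x, (deg e x == Dl) ==> [exists f in F, x \in f]] & #|F|.*2 <= #|T|].
have GM : Good M.
  rewrite /Good Medges Mcard andbT /=; apply/forallP => x; apply/implyP => /eqP dx.
  have [y exy c0] := cover0 x dx.
  apply/existsP; exists [set x; y]; rewrite set21 andbT.
  by apply/imset2P; exists x y; rewrite // !inE /= exy c0.
case: (@arg_minnP _ M Good (fun F : {set {set T}} => #|F|) GM) => F GF Fmin.
move: (GF) => /and3P [Fe /forallP Fcov Fc].
pose eR := remove_edges e F.
have eRe x y : eR x y -> e x y by case/andP.
have Rle x : deg eR x <= deg e x.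
  by apply: subset_leq_card; apply/subsetP => y; rewrite !inE => /eRe.
have up x : deg eR x <= Dl.-1.
  have [dx|dx] := eqVneq (deg e x) Dl; last first.
    rewrite -ltnS prednK //; apply: leq_ltn_trans (Rle x) _.
    by rewrite ltn_neqAle dx dD.
  have /existsP [f /andP [fF xf]] := implyP (Fcov x) (introT eqP dx).
  have /edgesP [p [q [epq E]]] := subsetP Fe f fF.
  have xpq : x \in [set p; q] by rewrite -E.
  have [y [E2 exy]] := set2_other esym epq xpq.
  rewrite -ltnS prednK // -dx; apply: proper_card; apply/properP; split.
    by apply/subsetP => z; rewrite !inE => /eRe.
  exists y; first by rewrite inE.
  by rewrite inE /eR /remove_edges -E2 -E fF andbF.
have [xm dxm] : exists x, deg e x = Dl.
  have [|xm Hm] := eq_bigmax (fun x => deg e x); first by apply/card_gt0P; exists x0.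
  by exists xm; rewrite /Dl /maxdeg Hm.
have /existsP [f /andP [fF _]] := implyP (Fcov xm) (introT eqP dxm).
pose F' := F :\ f.
have F'lt : #|F'| < #|F| by apply: proper_card; apply: properD1.
have nG : ~~ Good F'.
  by apply/negP => /Fmin; rewrite leqNgt F'lt.
have F'e : F' \subset edges e by apply: subset_trans Fe; apply: subsetDl.
have F'c : #|F'|.*2 <= #|T| by apply: leq_trans Fc; rewrite leq_double ltnW.
move: nG; rewrite /Good F'e F'c andbT /= => /forallPn [x].
rewrite negb_imply => /andP [/eqP dx /existsPn nF'].
have /existsP [g /andP [gF xg]] := implyP (Fcov x) (introT eqP dx).
have gf : g = f.
  apply/eqP; apply: contraTT isT => gf; move: (nF' g).
  by rewrite !inE gf gF xg.
subst g.
have /edgesP [p [q [epq E]]] := subsetP Fe f fF.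
have xpq : x \in [set p; q] by rewrite -E.
have [y [E2 exy]] := set2_other esym epq xpq.
have low : Dl.-1 <= deg eR x.
  rewrite -dx /deg (cardsD1 y) inE exy add1n /=.
  apply: subset_leq_card; apply/subsetP => z; rewrite !inE => /andP [zy exz].
  rewrite /eR /remove_edges exz /=; apply/negP => xzF.
  have [xzf|xzf] := eqVneq [set x; z] f.
    have : z \in f by rewrite -xzf !inE eqxx orbT.
    rewrite E E2 => /set2P [zx|zy']; first by rewrite zx irr in exz.
    by rewrite zy' eqxx in zy.
  by move: (nF' [set x; z]); rewrite !inE xzf xzF eqxx.
have mR : maxdeg eR = Dl.-1.
  apply/eqP; rewrite eqn_leq; apply/andP; split.
    by apply/bigmax_leqP => z _; apply: up.
  apply: leq_trans low _; rewrite /maxdeg; exact: (leq_bigmax x).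
have esF : es_Delta e <= #|F|.
  apply: bigmin_le; by rewrite powersetE Fe /= mR.
by apply: leq_trans Fc; rewrite leq_double.
Qed.
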